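(* Let $E$ be a graph, $K$ a field and $R$ a $K$-algebra. Restriction to $E^0$, $t\mapsto t|_{E^0}$, is a bijection from the set of canonical, $K$-linear, $R$-valued traces on $L_K(E)$ onto the set of $R$-valued graph traces on $E$. Equivalently, every $R$-valued graph trace $\delta$ on $E$ extends uniquely to a canonical $K$-linear $R$-valued trace $t_\delta$ on $L_K(E)$, namely the one with $t_\delta(pq^* )=\delta_{p,q}\,\delta(\mathbf{r}(p))$ for all paths $p,q$ with $\mathbf{r}(p)=\mathbf{r}(q)$.
   Context: A (directed) graph $E=(E^0,E^1,\mathbf{s},\mathbf{r})$ has vertex set $E^0$, edge set $E^1$, source and range maps; no finiteness or countability is assumed. A path is a vertex $v$ (length $0$, $\mathbf{s}(v)=\mathbf{r}(v)=v$) or a sequence $p=e_1\cdots e_n$ of edges with $\mathbf{r}(e_i)=\mathbf{s}(e_{i+1})$, length $|p|=n$, $\mathbf{s}(p)=\mathbf{s}(e_1)$, $\mathbf{r}(p)=\mathbf{r}(e_n)$. A vertex $v$ is regular if $\mathbf{s}^{-1}(v)$ is nonempty and finite. The Leavitt path algebra $L_K(E)$ is the free $K$-algebra generated by $E^0\cup E^1\cup\{e^*:e\in E^1\}$ subject to (V) $vw=\delta_{v,w}v$; (E1) $\mathbf{s}(e)e=e\mathbf{r}(e)=e$; (E2) $\mathbf{r}(e)e^*=e^*\mathbf{s}(e)=e^*$; (CK1) $e^*f=\delta_{e,f}\mathbf{r}(e)$; (CK2) $v=\sum_{e\in\mathbf{s}^{-1}(v)}ee^*$ for regular $v$. For a path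 $p=e_1\cdots e_n$, $p^*=e_n^*\cdots e_1^*$, $v^*=v$. A trace is an additive map $t$ with $t(xy)=t(yx)$; it is $K$-linear if $t(ax)=at(x)$ for $a\in K$. A trace $t$ on $L_K(E)$ is canonical if $t(pq^* )=\delta_{p,q}\,t(\mathbf{r}(p))$ for all paths $p,q$ with $\mathbf{r}(p)=\mathbf{r}(q)$. For a ring $R$, an $R$-valued graph trace on $E$ is a map $\delta:E^0\to R$ with $\delta(v)=\sum_{e\in\mathbf{s}^{-1}(v)}\delta(\mathbf{r}(e))$ for every regular vertex $v$. *)

(* Defs.v *)
From HB Require Import structures.
From mathcomp Require Import all_boot all_order all_algebra.
From Stdlib Require List.
Set Implicit Arguments. Unset Strict Implicit. Unset Printing Implicit Defensive.
Import GRing.Theory.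
Local Open Scope ring_scope.

(* Possibly non-unital associative K-algebras: a K-vector space with a
   bilinear associative multiplication.  (L_K(E) is unital only when E^0 is
   finite, so we cannot use MathComp's algType, which has a unit.) *)
Record nualg (K : fieldType) := NUAlg {
  nua_car :> lmodType K;
  nua_mul : nua_car -> nua_car -> nua_car;
  nua_mulA : forall x y z, nua_mul x (nua_mul y z) = nua_mul (nua_mul x y) z;
  nua_mulDl : forall x y z, nua_mul (x + y) z = nua_mul x z + nua_mul y z;
  nua_mulDr : forall x y z, nua_mul x (y + z) = nua_mul x y + nua_mul x z;
  nua_mulZl : forall (a : K) x y, nua_mul (a *: x) y = a *: nua_mul x y;
  nua_mulZr : forall (a : K) x y, nua_mul x (a *: y) = a *: nua_mul x y
}.
Arguments nua_mul {K} _ _ _.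

Section Graph.
Variables (V Ed : Type) (s r : Ed -> V).

(* [l] lists s^{-1}(v) exactly once each (so s^{-1}(v) is finite). *)
Definition enumerates (v : V) (l : seq Ed) : Prop :=
  List.NoDup l /\ forall e, s e = v <-> List.In e l.

Definition regular (v : V) : Prop := exists l, enumerates v l /\ l <> [::].

(* R-valued graph trace.  The sum over s^{-1}(v) is taken along any duplicate-
   free enumeration of s^{-1}(v) (all such enumerations are permutations of
   each other). *)
Definition graph_trace (R : nmodType) (delta : V -> R) : Prop :=
  forall v l, enumerates v l -> l <> [::] ->
    delta v = \sum_(e <- l) delta (r e).

Definition LP_family (K : fieldType) (B : nualg K)
  (P : V -> B) (S Ss : Ed -> B) : Prop :=
  [/\ (forall v, nua_mul B (P v) (P v) = P v)
        /\ (forall v w, v <> w -> nua_mul B (P v) (P w) = 0),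
      (forall e, nua_mul B (P (s e)) (S e) = S e
                 /\ nua_mul B (S e) (P (r e)) = S e),
      (forall e, nua_mul B (P (r e)) (Ss e) = Ss e
                 /\ nua_mul B (Ss e) (P (s e)) = Ss e),
      (forall e, nua_mul B (Ss e) (S e) = P (r e))
        /\ (forall e f, e <> f -> nua_mul B (Ss e) (S f) = 0)
    & (forall v l, enumerates v l -> l <> [::] ->
         P v = \sum_(e <- l) nua_mul B (S e) (Ss e))].

Definition nua_hom (K : fieldType) (A B : nualg K) (f : A -> B) : Prop :=
  [/\ forall x y, f (x + y) = f x + f y,
      forall (a : K) x, f (a *: x) = a *: f x
    & forall x y, f (nua_mul A x y) = nua_mul B (f x) (f y)].

(* (A, P, S, Ss) is the Leavitt path algebra L_K(E): the free K-algebra on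
   E^0 ∪ E^1 ∪ (E^1)^* modulo the relations, i.e. the universal
   (initial) K-algebra with a Leavitt E-family. *)
Definition is_LPA (K : fieldType) (A : nualg K)
  (P : V -> A) (S Ss : Ed -> A) : Prop :=
  LP_family P S Ss /\
  forall (B : nualg K) (P' : V -> B) (S' Ss' : Ed -> B),
    LP_family P' S' Ss' ->
    exists f : A -> B,
      [/\ nua_hom f, (forall v, f (P v) = P' v), (forall e, f (S e) = S' e),
          (forall e, f (Ss e) = Ss' e)
        & forall g : A -> B, nua_hom g -> (forall v, g (P v) = P' v) ->
            (forall e, g (S e) = S' e) -> (forall e, g (Ss e) = Ss' e) ->
            forall x, g x = f x].

(* Paths: a pair (v, [e1;...;en]) with v = s(e1), r(ei) = s(e(i+1)).
   (v, [::]) is the length-0 path v. *)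
Definition path := (V * seq Ed)%type.

Fixpoint chain (v : V) (l : seq Ed) : Prop :=
  match l with
  | [::] => True
  | e :: l' => s e = v /\ chain (r e) l'
  end.

Definition is_path (p : path) : Prop := chain p.1 p.2.

Fixpoint last_vertex (v : V) (l : seq Ed) : V :=
  match l with
  | [::] => v
  | e :: l' => last_vertex (r e) l'
  end.

Definition path_r (p : path) : V := last_vertex p.1 p.2.

(* image of p = e1...en in A: P(v) S(e1) ... S(en)  (= e1...en for n>0) *)
Definition pmon (K : fieldType) (A : nualg K) (P : V -> A) (S : Ed -> A)
  (p : path) : A :=
  foldl (fun x e => nua_mul A x (S e)) (P p.1) p.2.

(* image of p^* : Ss(en) ... Ss(e1) P(v)  (= en^*...e1^* for n>0) *)
Definition pmon_star (K : fieldType) (A : nualg K) (P : V -> A) (Ss : Ed -> A)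
  (p : path) : A :=
  foldl (fun x e => nua_mul A (Ss e) x) (P p.1) p.2.

Definition is_trace (K : fieldType) (A : nualg K) (R : nmodType) (t : A -> R)
  : Prop :=
  (forall x y, t (x + y) = t x + t y) /\
  (forall x y, t (nua_mul A x y) = t (nua_mul A y x)).

Definition K_linear (K : fieldType) (A : nualg K) (R : lmodType K) (t : A -> R)
  : Prop := forall (a : K) x, t (a *: x) = a *: t x.

Definition canonical_trace (K : fieldType) (A : nualg K) (R : nmodType)
  (P : V -> A) (S Ss : Ed -> A) (t : A -> R) : Prop :=
  forall p q, is_path p -> is_path q -> path_r p = path_r q ->
    (p = q -> t (nua_mul A (pmon P S p) (pmon_star P Ss q)) = t (P (path_r p)))
    /\ (p <> q -> t (nua_mul A (pmon P S p) (pmon_star P Ss q)) = 0).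

End Graph.

(* Main.v *)
Require Import Defs.
From HB Require Import structures.
From mathcomp Require Import all_boot all_order all_algebra.
From mathcomp Require Import boolp functions.
Require Import Defs.
From Stdlib Require Import ProofIrrelevance.
Set Implicit Arguments. Unset Strict Implicit. Unset Printing Implicit Defensive.
Import GRing.Theory.
Local Open Scope ring_scope.
Record subspec (K : fieldType) (U : lmodType K) := SubSpec {
  sQ : U -> Prop;
  sQ0 : sQ 0;
  sQD : forall x y, sQ x -> sQ y -> sQ (x + y);
  sQN : forall x, sQ x -> sQ (- x);
  sQZ : forall (a : K) x, sQ x -> sQ (a *: x) }.

Definition subT (K : fieldType) (U : lmodType K) (S : subspec U) := {x : U | sQ S x}.
HB.instance Definition _ K U S := gen_eqMixin (@subT K U S).
HB.instance Definition _ K U S := gen_choiceMixin (@subT K U S).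

Section SubOps.
Variables (K : fieldType) (U : lmodType K) (S : subspec U).
Definition sval' (x : subT S) : U := proj1_sig x.
Lemma sval_inj (x y : subT S) : sval' x = sval' y -> x = y.
Proof. case: x y => [x px] [y py] /= E; subst y; by rewrite (proof_irrelevance _ px py). Qed.
Definition szero : subT S := exist _ 0 (sQ0 S).
Definition sadd (x y : subT S) : subT S := exist _ (sval' x + sval' y) (sQD (proj2_sig x) (proj2_sig y)).
Definition sopp (x : subT S) : subT S := exist _ (- sval' x) (sQN (proj2_sig x)).
Definition sscale (a : K) (x : subT S) : subT S := exist _ (a *: sval' x) (sQZ a (proj2_sig x)).
Lemma saddA : associative sadd. Proof. by move=> x y z; apply: sval_inj; rewrite /= addrA. Qed.
Lemma saddC : commutative sadd. Proof. by move=> x y; apply: sval_inj; rewrite /= addrC. Qed.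
Lemma sadd0 : left_id szero sadd. Proof. by move=> x; apply: sval_inj; rewrite /= add0r. Qed.
Lemma saddN : left_inverse szero sopp sadd. Proof. by move=> x; apply: sval_inj; rewrite /= addNr. Qed.
End SubOps.
HB.instance Definition _ K U S := GRing.isZmodule.Build (@subT K U S) (@saddA K U S) (@saddC K U S) (@sadd0 K U S) (@saddN K U S).
Section SubOps2.
Variables (K : fieldType) (U : lmodType K) (S : subspec U).
Lemma sscaleA a b (v : subT S) : sscale a (sscale b v) = sscale (a * b) v.
Proof. by apply: sval_inj; rewrite /= scalerA. Qed.
Lemma sscale1 : left_id 1 (@sscale K U S). Proof. by move=> x; apply: sval_inj; rewrite /= scale1r. Qed.
Lemma sscaleDr : right_distributive (@sscale K U S) +%R.
Proof. by move=> a x y; apply: sval_inj; rewrite /= scalerDr. Qed.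
Lemma sscaleDl (v : subT S) : {morph (@sscale K U S)^~ v: a b / a + b}.
Proof. by move=> a b; apply: sval_inj; rewrite /= scalerDl. Qed.
End SubOps2.
HB.instance Definition _ (K : fieldType) (U : lmodType K) S := GRing.Zmodule_isLmodule.Build K (@subT K U S) (@sscaleA K U S) (@sscale1 K U S) (@sscaleDr K U S) (@sscaleDl K U S).

Lemma sval_add K U S (x y : @subT (K : fieldType) (U : lmodType K) (S : subspec U)) : sval' (x + y) = sval' x + sval' y. Proof. by []. Qed.
Lemma sval_scale K U S a (x : @subT (K : fieldType) (U : lmodType K) (S : subspec U)) : sval' (a *: x) = a *: sval' x. Proof. by []. Qed.
Lemma sval_zero K U S : sval' (0 : @subT (K : fieldType) (U : lmodType K) (S : subspec U)) = 0. Proof. by []. Qed.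
Lemma cat_prefix (T : Type) (a e b f : seq T) : a ++ e = b ++ f ->
  (exists k, b = a ++ k) \/ (exists k, a = b ++ k).
Proof.
elim: a b => [|x a IH] [|y b] /=; try by [left; exists (y :: b) | right; exists (x :: a) | left; exists [::]].
case=> <- /IH [[k ->]|[k ->]]; [left|right]; by exists k.
Qed.

Lemma cat_self_nil (T : Type) (a k : seq T) : a = a ++ k -> k = [::].
Proof. move/(congr1 size); rewrite size_cat => H; apply: size0nil; apply/eqP.
by rewrite -(eqn_add2l (size a)) addn0 -H. Qed.

Lemma catL_inj (T : Type) (a b c : seq T) : a ++ b = a ++ c -> b = c.
Proof. by elim: a => //= x a IH [] /IH. Qed.

Section Mono.
Variables (V Ed : Type).
Notation pth := (path V Ed).
Definition M := (pth * pth)%type.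

Definition mulM (x y : M) : option M :=
 if pselect (x.2.1 = y.1.1 /\ exists d, y.1.2 = x.2.2 ++ d)
 then Some ((x.1.1, x.1.2 ++ drop (size x.2.2) y.1.2), y.2)
 else if pselect (x.2.1 = y.1.1 /\ exists d, x.2.2 = y.1.2 ++ d)
 then Some (x.1, (y.2.1, y.2.2 ++ drop (size y.1.2) x.2.2))
 else None.

Variant mul_spec (x y : M) : option M -> Type :=
| MS1 d of x.2.1 = y.1.1 & y.1.2 = x.2.2 ++ d :
    mul_spec x y (Some ((x.1.1, x.1.2 ++ d), y.2))
| MS2 d of x.2.1 = y.1.1 & x.2.2 = y.1.2 ++ d & d <> [::] :
    mul_spec x y (Some (x.1, (y.2.1, y.2.2 ++ d)))
| MS3 of ~ (x.2.1 = y.1.1 /\ ((exists d, y.1.2 = x.2.2 ++ d) \/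
                               (exists d, x.2.2 = y.1.2 ++ d))) :
    mul_spec x y None.

Lemma mulMP x y : mul_spec x y (mulM x y).
Proof.
rewrite /mulM; case: pselect => /= [[H1 Hd0]|N1].
  case: (cid Hd0) => d Hd; rewrite Hd drop_size_cat //; exact: MS1.
case: pselect => /= [[H1 Hd0]|N2].
  case: (cid Hd0) => d Hd; rewrite Hd drop_size_cat //; apply: (MS2 H1 Hd) => d0.
  by apply: N1; split => //; exists [::]; rewrite Hd d0 !cats0.
apply: MS3 => -[H [[d Hd]|[d Hd]]]; [apply: N1|apply: N2]; split => //; by exists d.
Qed.

Definition act (x : M) (c : pth) : option pth :=
 if pselect (x.2.1 = c.1 /\ exists d, c.2 = x.2.2 ++ d)
 then Some (x.1.1, x.1.2 ++ drop (size x.2.2) c.2) else None.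

Variant act_spec (x : M) (c : pth) : option pth -> Type :=
| AS1 d of x.2.1 = c.1 & c.2 = x.2.2 ++ d : act_spec x c (Some (x.1.1, x.1.2 ++ d))
| AS2 of ~ (x.2.1 = c.1 /\ exists d, c.2 = x.2.2 ++ d) : act_spec x c None.

Lemma actP x c : act_spec x c (act x c).
Proof.
rewrite /act; case: pselect => /= [[H1 Hd0]|N1]; last exact: AS2.
case: (cid Hd0) => d Hd; rewrite Hd drop_size_cat //; exact: AS1.
Qed.

Definition actO (o : option M) c := if o is Some x then act x c else None.
Definition obind' (f : pth -> option pth) (o : option pth) := if o is Some c then f c else None.

Lemma act_cat x k : act x (x.2.1, x.2.2 ++ k) = Some (x.1.1, x.1.2 ++ k).
Proof.
case: actP => /= [d _ /catL_inj ->|[]] //; by split => //; exists k.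
Qed.

Lemma act_cat' (p : pth) (w : V) b k : act (p, (w, b)) (w, b ++ k) = Some (p.1, p.2 ++ k).
Proof. exact: (act_cat (p, (w, b)) k). Qed.

Lemma act_Some x c c' : act x c = Some c' ->
  exists k, c = (x.2.1, x.2.2 ++ k) /\ c' = (x.1.1, x.1.2 ++ k).
Proof.
case: actP => // d H1 H2 [<-]; exists d; split => //.
by case: c H1 H2 => /= c1 c2 <- <-.
Qed.

Lemma act_None x c : act x c = None -> forall k, c <> (x.2.1, x.2.2 ++ k).
Proof. by move=> H k E; move: H; rewrite E act_cat. Qed.

Lemma act_mul x y c : actO (mulM x y) c = obind' (act x) (act y c).
Proof.
case: x y => [[u a] [w b]] [[u' a'] [w' b']].
case: mulMP => /=.
- move=> d <- ->; case Hy: (act ((w, b ++ d), (w', b')) c) => [c1|] /=.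
    have [k [-> ->]] := act_Some Hy.
    by rewrite /= act_cat' /= -!catA act_cat'.
  case Hl: act => [c2|] //.
  have [k [Ec _]] := act_Some Hl.
  by have := act_None Hy Ec.
- move=> d <- -> dn; case Hy: (act ((w, a'), (w', b')) c) => [c1|] /=.
    have [k [-> ->]] := act_Some Hy.
    case Hx: act => [c2|] /=.
      have [k' [Ec ->]] := act_Some Hx.
      move: Ec => /= [] ; rewrite -catA => /catL_inj ->.
      by rewrite /= catA act_cat'.
    case Hl: act => [c3|] //.
    have [k' [Ec _]] := act_Some Hl.
    move: Ec => /= []; rewrite -catA => /catL_inj Ek.
    by have := act_None Hx (k := k'); rewrite Ek /= catA; case.
  case Hl: act => [c3|] //.
  have [k' [Ec _]] := act_Some Hl.
  by have := act_None Hy (k := d ++ k'); rewrite Ec /= catA.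
- move=> N; case Hy: (act ((u', a'), (w', b')) c) => [c1|] //=.
  have [k [_ ->]] := act_Some Hy.
  case Hx: act => [c2|] //.
  have [k' [[Ew Ek] _]] := act_Some Hx.
  by case: N; split => //; case: (cat_prefix Ek); [right|left].
Qed.

Lemma act_self x : act x x.2 = Some x.1.
Proof.
case: actP => [d _|[]]; last by split => //; exists [::]; rewrite cats0.
rewrite -{1}(cats0 x.2.2) => /catL_inj <-; rewrite cats0; by case: x => [[]].
Qed.

Lemma act_inj x x' : (forall c, act x c = act x' c) -> x = x'.
Proof.
move=> E.
have h1 := act_self x; have h2 := act_self x'.
rewrite E in h1; rewrite -E in h2.
have [k [E2 E1]] := act_Some h1; have [k' [E2' E1']] := act_Some h2.
have H2 := congr1 snd E2; have H2' := congr1 snd E2'; simpl in H2, H2'.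
have : x.2.2 = x.2.2 ++ (k' ++ k) by rewrite {1}H2 H2' catA.
move/cat_self_nil => Hk; have k0 : k = [::] by move: Hk; clear; case: k'.
rewrite k0 !cats0 in E2 E1; move: E2 E1; clear; case: x x' => [[u a] [w b]] [[u' a'] [w' b']] /= [-> ->] [-> ->]; by [].
Qed.

Definition mulO (o1 o2 : option M) : option M :=
  if o1 is Some x then (if o2 is Some y then mulM x y else None) else None.

Lemma actO_mul o1 o2 c : actO (mulO o1 o2) c = obind' (actO o1) (actO o2 c).
Proof. case: o1 o2 => [x|] [y|] //=; first exact: act_mul. by case: act. Qed.

Lemma actO_inj o1 o2 : (forall c, actO o1 c = actO o2 c) -> o1 = o2.
Proof.
case: o1 o2 => [x|] [y|] E; first by rewrite (@act_inj x y).
- by move: (E x.2); rewrite /= act_self.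
- by move: (E y.2); rewrite /= act_self.
- by [].
Qed.

Lemma mulOA o1 o2 o3 : mulO (mulO o1 o2) o3 = mulO o1 (mulO o2 o3).
Proof.
apply: actO_inj => c; rewrite !actO_mul; by case: (actO o3 c) => //= c'; rewrite actO_mul.
Qed.

Lemma mulO0 o : mulO o None = None. Proof. by case: o. Qed.
End Mono.

Lemma nil2 (T : Type) (l1 l2 : seq T) : l1 ++ l2 = [::] -> l1 = [::] /\ l2 = [::].
Proof. by case: l1; case: l2. Qed.

Section Valid.
Variables (V Ed : Type) (s r : Ed -> V).
Notation pth := (path V Ed).
Notation M := (M V Ed).
Notation lv := (last_vertex r).

Lemma chain_cat v l1 l2 : chain s r v (l1 ++ l2) <-> chain s r v l1 /\ chain s r (lv v l1) l2.
Proof. elim: l1 v => [|e l IH] v /=; first by split => // -[]. rewrite IH; tauto. Qed.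

Lemma lv_cat v l1 l2 : lv v (l1 ++ l2) = lv (lv v l1) l2.
Proof. by elim: l1 v => //= e l IH v. Qed.

Definition valid (x : M) := is_path s r x.1 /\ is_path s r x.2 /\ path_r r x.1 = path_r r x.2.
Definition validO (o : option M) := if o is Some x then valid x else True.

Lemma valid_mul x y : valid x -> valid y -> validO (mulM x y).
Proof.
case: x y => [[u a] [w b]] [[u' a'] [w' b']]; rewrite /valid /is_path /path_r /=.
case: mulMP => //= d.
- move=> <- -> [ca [cb eab]] [/chain_cat [cb' cd] [cb'' e']].
  rewrite /valid /is_path /path_r /= chain_cat lv_cat eab -e' lv_cat; do !split => //; by rewrite -eab.
- move=> <- -> dn [ca [/chain_cat [ca' cd] eab]] [ca'' [cb' e']].
  rewrite /valid /is_path /path_r /= chain_cat eab !lv_cat -e'; do !split => //.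
Qed.

Lemma valid_mulO o1 o2 : validO o1 -> validO o2 -> validO (mulO o1 o2).
Proof. case: o1 o2 => [x|] [y|] //=; exact: valid_mul. Qed.

Variable (R : nmodType) (delta : V -> R).

Definition tauO (o : option M) : R :=
  if o is Some x then (if pselect (x.1 = x.2) then delta (path_r r x.1) else 0) else 0.

Lemma sel_eq (P Q : Prop) (a b : R) : (P <-> Q) -> (P -> a = b) ->
  (if pselect P then a else 0) = (if pselect Q then b else 0).
Proof.
move=> [PQ QP] E; case: pselect => p; case: pselect => q //.
- exact: E.
- by case: q; exact: PQ.
- by case: p; exact: QP.
Qed.

Lemma sel0 (P : Prop) (a : R) : ~ P -> (if pselect P then a else 0) = 0.
Proof. by move=> np; case: pselect. Qed.

Lemma tau_sym1 x y : valid x -> valid y ->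
  (x.2.1 = y.1.1 /\ exists d, y.1.2 = x.2.2 ++ d) ->
  tauO (mulM x y) = tauO (mulM y x).
Proof.
case: x y => [[u a] [w b]] [[u' a'] [w' b']]; rewrite /valid /is_path /path_r /=.
move=> [ca [cb eab]] [ca' [cb' eab']] [ew [d ed]].
subst u' a'.
have -> : mulM (u, a, (w, b)) (w, b ++ d, (w', b')) = Some ((u, a ++ d), (w', b')).
  case: mulMP => /= [d' _ /catL_inj <- //|d' _ |[]].
  - by rewrite -catA => /cat_self_nil; clear; case: d'; case: d.
  - by split => //; left; exists d.
rewrite /=; case: mulMP => /=.
- move=> e eu ea; subst w' a; apply: sel_eq.
    split => /(congr1 snd) /=.
      by rewrite -catA => /esym /cat_self_nil /nil2 [-> ->]; rewrite !cats0.
    by rewrite -catA => /esym /cat_self_nil /nil2 [-> ->]; rewrite !cats0.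
  move/(congr1 snd) => /=; rewrite -catA => /esym /cat_self_nil /nil2 [e0 d0]; subst e d.
  by rewrite !cats0 in eab *; rewrite /path_r /= eab.
- move=> e eu ea en; subst w' b'; apply: sel_eq.
    by split => /(congr1 snd) /= /catL_inj ->.
  by move=> _; rewrite /path_r /= !lv_cat eab.
- move=> N; apply: sel0 => E; apply: N; split; first by have := congr1 fst E.
  by right; exists d; have := congr1 snd E.
Qed.

Lemma tau_sym x y : valid x -> valid y -> tauO (mulM x y) = tauO (mulM y x).
Proof.
move=> vx vy.
case: (pselect (x.2.1 = y.1.1 /\ exists d, y.1.2 = x.2.2 ++ d)) => [h|n1].
  exact: tau_sym1.
case: (pselect (y.2.1 = x.1.1 /\ exists d, x.1.2 = y.2.2 ++ d)) => [h|n2].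
  by rewrite (tau_sym1 vy vx h).
move: vx vy n1 n2; case: x y => [[u a] [w b]] [[u' a'] [w' b']]; rewrite /valid /is_path /path_r /=.
move=> [ca [cb eab]] [ca' [cb' eab']] n1 n2.
case: mulMP => /= [d ? ?|d e1 e2 dn|N]; first by case: n1; split => //; exists d.
- case: mulMP => /= [e ? ?|e f1 f2 en|N2]; first by case: n2; split => //; exists e.
  + rewrite !sel0 // => /(congr1 snd) /=.
      by rewrite e2 -catA => /cat_self_nil /nil2 [].
    by rewrite f2 -catA => /cat_self_nil /nil2 [].
  + apply: sel0 => E; apply: N2; split; first by have := congr1 fst E.
    by left; exists d; have := congr1 snd E.
- case: mulMP => /= [e ? ?|e f1 f2 en|N2]; first by case: n2; split => //; exists e.
  + symmetry; apply: sel0 => E; apply: n1; split; first by have := congr1 fst E.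
    by exists e; have := congr1 snd E.
  + by [].
Qed.

End Valid.

Section Model.
Variables (V Ed : Type) (s r : Ed -> V) (K : fieldType) (R : lmodType K) (delta : V -> R).
Notation M := (M V Ed).
Notation tau := (tauO r delta).
Notation validO := (validO s r).

Definition app (x : option M) (m : option M) : option M :=
  if m is Some z then mulO x (Some z) else x.
Definition appR (m : option M) (x : option M) : option M :=
  if m is Some z then mulO (Some z) x else x.

Definition L := seq (K * option M).
Fixpoint validL (l : L) : Prop := if l is km :: l' then validO km.2 /\ validL l' else True.

Fixpoint lmul (l1 l2 : L) : L :=
  if l1 is k1 :: l1' then [seq (k1.1 * k2.1, mulO k1.2 k2.2) | k2 <- l2] ++ lmul l1' l2 else [::].

Definition SL (l : L) (g : option M -> R) : R := \sum_(km <- l) km.1 *: g km.2.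

Definition Phi (l : L) : option M -> R :=
  fun m => if pselect (validO m) then SL l (fun o => tau (app o m)) else 0.

Definition Phi' (l : L) (o : option M) : R := if o is Some z then Phi l (Some z) else 0.

Lemma validL_cat l1 l2 : validL (l1 ++ l2) <-> validL l1 /\ validL l2.
Proof. elim: l1 => [|km l IH] /=; [tauto|rewrite IH; tauto]. Qed.

Lemma validL_lmul l1 l2 : validL l1 -> validL l2 -> validL (lmul l1 l2).
Proof.
move=> v1 v2; elim: l1 v1 => //= km l IH [vk vl]; apply/validL_cat; split; last exact: IH.
elim: l2 v2 {IH} => //= km2 l2 IH2 [vk2 vl2]; split; [exact: valid_mulO|exact: IH2].
Qed.

Lemma SL_cat l1 l2 g : SL (l1 ++ l2) g = SL l1 g + SL l2 g.
Proof. by rewrite /SL big_cat. Qed.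

Lemma SL_lmul l1 l2 g : SL (lmul l1 l2) g =
  \sum_(k1 <- l1) k1.1 *: \sum_(k2 <- l2) k2.1 *: g (mulO k1.2 k2.2).
Proof.
elim: l1 => [|k1 l1 IH] /=; first by rewrite /SL !big_nil.
rewrite SL_cat IH big_cons; congr (_ + _).
rewrite /SL big_map scaler_sumr; apply: eq_bigr => k2 _ /=; by rewrite scalerA.
Qed.

Lemma Phi_inv l m : ~ validO m -> Phi l m = 0.
Proof. by move=> h; rewrite /Phi; case: pselect. Qed.

Lemma PhiE l m : validO m -> Phi l m = SL l (fun o => tau (app o m)).
Proof. by move=> h; rewrite /Phi; case: pselect. Qed.

Lemma tau_symO o1 o2 : validO o1 -> validO o2 -> tau (mulO o1 o2) = tau (mulO o2 o1).
Proof. case: o1 o2 => [x|] [y|] //; exact: tau_sym. Qed.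

Lemma Phi'E l o : validO o -> Phi' l o = SL l (fun x => tau (mulO x o)).
Proof.
case: o => [z|] vo /=; first by rewrite PhiE.
by rewrite /SL big1 // => km _; rewrite mulO0 scaler0.
Qed.

Lemma app_mul x y m : app (mulO x y) m = mulO x (app y m).
Proof. case: m => //= z; exact: mulOA. Qed.

Lemma validO_app y m : validO y -> validO m -> validO (app y m).
Proof. case: m => // z vy vz; exact: (valid_mulO vy vz). Qed.
Lemma validO_appR y m : validO y -> validO m -> validO (appR m y).
Proof. case: m => // z vy vz; exact: (valid_mulO vz vy). Qed.

Lemma SL_ind (P : L -> Prop) : True. Proof. by []. Qed.

Lemma validL_In l km : validL l -> List.In km l -> validO km.2.
Proof. elim: l => //= k l IH [vk vl] [<-|h] //; exact: IH. Qed.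

Lemma SL_ext l g1 g2 : validL l -> (forall o, validO o -> g1 o = g2 o) -> SL l g1 = SL l g2.
Proof.
elim: l => [|km l IH] /=; first by rewrite /SL !big_nil.
move=> [vk vl] E; rewrite /SL !big_cons -/(SL l g1) -/(SL l g2) E // IH //.
Qed.

Lemma WL l1 l2 m : validL l1 -> validL l2 -> validO m ->
  Phi (lmul l1 l2) m = SL l2 (fun y => Phi' l1 (app y m)).
Proof.
move=> v1 v2 vm; rewrite PhiE // SL_lmul.
rewrite (@SL_ext l2 _ (fun y => SL l1 (fun x => tau (mulO x (app y m))))); last first.
  by move=> o vo; rewrite Phi'E //; exact: validO_app.
  by [].
rewrite /SL; transitivity (\sum_(k1 <- l1) \sum_(k2 <- l2) (k1.1 * k2.1) *: tau (mulO k1.2 (app k2.2 m))).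
  apply: eq_bigr => k1 _; rewrite scaler_sumr; apply: eq_bigr => k2 _; by rewrite scalerA app_mul.
rewrite exchange_big; apply: eq_bigr => k2 _; rewrite scaler_sumr; apply: eq_bigr => k1 _; by rewrite scalerA mulrC.
Qed.

Lemma WR l1 l2 m : validL l1 -> validL l2 -> validO m ->
  Phi (lmul l1 l2) m = SL l1 (fun x => Phi' l2 (appR m x)).
Proof.
move=> v1 v2 vm; rewrite PhiE // SL_lmul.
change (SL l1 (fun x => SL l2 (fun y => tau (app (mulO x y) m))) =
  SL l1 (fun x => Phi' l2 (appR m x))).
apply: SL_ext => // x vx; rewrite Phi'E; last exact: validO_appR.
apply: SL_ext => // y vy.
case: m vm => [z|] vm /=; last exact: tau_symO.
rewrite mulOA tau_symO ?mulOA //; exact: valid_mulO.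
Qed.

Lemma Phi_wd l1 l1' l2 l2' : validL l1 -> validL l1' -> validL l2 -> validL l2' ->
  Phi l1 = Phi l1' -> Phi l2 = Phi l2' -> Phi (lmul l1 l2) = Phi (lmul l1' l2').
Proof.
move=> v1 v1' v2 v2' E1 E2; apply: funext => m.
case: (pselect (validO m)) => vm; last by rewrite !Phi_inv.
have E1' : Phi' l1 = Phi' l1' by apply: funext => -[z|] //=; rewrite E1.
have E2' : Phi' l2 = Phi' l2' by apply: funext => -[z|] //=; rewrite E2.
by rewrite WL // E1' -WL // WR // E2' -WR.
Qed.

End Model.

Section ModelB.
Variables (V Ed : Type) (s r : Ed -> V) (K : fieldType) (R : lmodType K) (delta : V -> R).
Notation M := (M V Ed).
Notation tau := (tauO r delta).
Notation validO := (validO s r).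
Notation L := (L V Ed K).
Notation Phi := (@Phi V Ed s r K R delta).
Notation validL := (@validL V Ed s r K).
Notation SL := (@SL V Ed K R).

Lemma fct_addE (F G : option M -> R) m : (F + G) m = F m + G m. Proof. by []. Qed.
Lemma fct_oppE (F : option M -> R) m : (- F) m = - F m. Proof. by []. Qed.
Lemma fct_scaleE a (F : option M -> R) m : (a *: F) m = a *: F m. Proof. by []. Qed.
Lemma fct_zeroE m : (0 : option M -> R) m = 0. Proof. by []. Qed.

Lemma Phi_nil : Phi [::] = 0.
Proof. apply: funext => m; rewrite /Phi /SL big_nil; by case: pselect. Qed.

Lemma Phi_cat l1 l2 : Phi (l1 ++ l2) = Phi l1 + Phi l2.
Proof. apply: funext => m; rewrite fct_addE /Phi; case: pselect => h; by rewrite ?SL_cat ?addr0. Qed.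

Definition lneg (l : L) : L := [seq (- km.1, km.2) | km <- l].
Definition lscale (a : K) (l : L) : L := [seq (a * km.1, km.2) | km <- l].

Lemma validL_map (f : K -> K) l : validL l -> validL [seq (f km.1, km.2) | km <- l].
Proof. by elim: l => //= km l IH [vk vl]; split => //; exact: IH. Qed.

Lemma Phi_neg l : Phi (lneg l) = - Phi l.
Proof.
apply: funext => m; rewrite fct_oppE /Phi; case: pselect => h; last by rewrite oppr0.
by rewrite /SL big_map -sumrN; apply: eq_bigr => km _; rewrite scaleNr.
Qed.

Lemma Phi_scale a l : Phi (lscale a l) = a *: Phi l.
Proof.
apply: funext => m; rewrite fct_scaleE /Phi; case: pselect => h; last by rewrite scaler0.
by rewrite /SL big_map scaler_sumr; apply: eq_bigr => km _; rewrite scalerA.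
Qed.

Definition QB (F : option M -> R) := exists l, validL l /\ F = Phi l.

Lemma QB0 : QB 0. Proof. by exists [::]; rewrite Phi_nil. Qed.
Lemma QBD F G : QB F -> QB G -> QB (F + G).
Proof. move=> [l1 [v1 ->]] [l2 [v2 ->]]; exists (l1 ++ l2); rewrite Phi_cat; split => //; exact/validL_cat. Qed.
Lemma QBN F : QB F -> QB (- F).
Proof. move=> [l [v ->]]; exists (lneg l); rewrite Phi_neg; split => //; exact: validL_map. Qed.
Lemma QBZ a F : QB F -> QB (a *: F).
Proof. move=> [l [v ->]]; exists (lscale a l); rewrite Phi_scale; split => //; exact: validL_map. Qed.

Definition BS : subspec (option M -> R) := SubSpec QB0 QBD QBN QBZ.
Definition B := subT BS.

Definition rep (F : B) : L := proj1_sig (cid (proj2_sig F)).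
Lemma repP (F : B) : validL (rep F) /\ sval' F = Phi (rep F).
Proof. exact: (proj2_sig (cid (proj2_sig F))). Qed.

Definition mk (l : L) (vl : validL l) : B := exist _ (Phi l) (ex_intro _ l (conj vl erefl)).

Definition bmul (F G : B) : B :=
  @mk (lmul (rep F) (rep G)) (validL_lmul (proj1 (repP F)) (proj1 (repP G))).

Lemma bmulE F G l1 l2 : validL l1 -> validL l2 -> sval' F = Phi l1 -> sval' G = Phi l2 ->
  sval' (bmul F G) = Phi (lmul l1 l2).
Proof.
move=> v1 v2 E1 E2; rewrite /= /bmul /mk /=.
have [r1 e1] := repP F; have [r2 e2] := repP G.
apply: Phi_wd => //; by [rewrite -e1 | rewrite -e2].
Qed.

End ModelB.

Section ModelAlg.
Variables (V Ed : Type) (s r : Ed -> V) (K : fieldType) (R : lmodType K) (delta : V -> R).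
Notation M := (M V Ed).
Notation tau := (tauO r delta).
Notation validO := (validO s r).
Notation L := (L V Ed K).
Notation Phi := (@Phi V Ed s r K R delta).
Notation validL := (@validL V Ed s r K).
Notation SL := (@SL V Ed K R).
Notation B := (@B V Ed s r K R delta).
Notation lmul := (@lmul V Ed K).

Lemma SL_eq l g1 g2 : (forall o, g1 o = g2 o) -> SL l g1 = SL l g2.
Proof. move=> E; apply: eq_bigr => km _; by rewrite E. Qed.

Lemma SL_lmul' l1 l2 g : SL (lmul l1 l2) g = SL l1 (fun x => SL l2 (fun y => g (mulO x y))).
Proof. exact: SL_lmul. Qed.

Lemma SL_add l g1 g2 : SL l (fun o => g1 o + g2 o) = SL l g1 + SL l g2.
Proof. by rewrite /SL -big_split; apply: eq_bigr => km _; rewrite scalerDr. Qed.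

Lemma SL_scale l a g : SL (lscale a l) g = a *: SL l g.
Proof. by rewrite /SL big_map scaler_sumr; apply: eq_bigr => km _; rewrite scalerA. Qed.

Lemma SL_scaleg l a g : SL l (fun o => a *: g o) = a *: SL l g.
Proof. by rewrite /SL scaler_sumr; apply: eq_bigr => km _; rewrite !scalerA mulrC. Qed.

Lemma Phi_ext l l' : (forall m, validO m -> SL l (fun o => tau (app o m)) = SL l' (fun o => tau (app o m))) -> Phi l = Phi l'.
Proof. move=> E; apply: funext => m; case: (pselect (validO m)) => h; [by rewrite !PhiE // E|by rewrite !Phi_inv]. Qed.

Lemma lmulA_Phi l1 l2 l3 : Phi (lmul (lmul l1 l2) l3) = Phi (lmul l1 (lmul l2 l3)).
Proof.
apply: Phi_ext => m _; rewrite !SL_lmul'; apply: SL_eq => x; rewrite SL_lmul'.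
apply: SL_eq => y; apply: SL_eq => z; by rewrite mulOA.
Qed.

Lemma lmul_cat l1 l2 l3 : lmul (l1 ++ l2) l3 = lmul l1 l3 ++ lmul l2 l3.
Proof. by elim: l1 => //= k l IH; rewrite IH catA. Qed.

Lemma lmulDr_Phi l1 l2 l3 : Phi (lmul l1 (l2 ++ l3)) = Phi (lmul l1 l2) + Phi (lmul l1 l3).
Proof.
rewrite -Phi_cat; apply: Phi_ext => m _; rewrite SL_cat !SL_lmul' -SL_add.
by apply: SL_eq => x; rewrite SL_cat.
Qed.

Lemma lmulZl_Phi a l1 l2 : Phi (lmul (lscale a l1) l2) = a *: Phi (lmul l1 l2).
Proof. rewrite -Phi_scale; apply: Phi_ext => m _; by rewrite SL_scale !SL_lmul' SL_scale. Qed.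

Lemma lmulZr_Phi a l1 l2 : Phi (lmul l1 (lscale a l2)) = a *: Phi (lmul l1 l2).
Proof.
rewrite -Phi_scale; apply: Phi_ext => m _; rewrite SL_scale !SL_lmul' -SL_scaleg.
by apply: SL_eq => x; rewrite SL_scale.
Qed.

Lemma repE (F : B) : sval' F = Phi (rep F). Proof. exact: (proj2 (repP F)). Qed.
Lemma repV (F : B) : validL (rep F). Proof. exact: (proj1 (repP F)). Qed.

Lemma bmulA : forall x y z : B, bmul x (bmul y z) = bmul (bmul x y) z.
Proof.
move=> F G H; apply: sval_inj.
rewrite (bmulE (repV F) (validL_lmul (repV G) (repV H)) (repE F) (bmulE (repV G) (repV H) (repE G) (repE H))).
rewrite (bmulE (validL_lmul (repV F) (repV G)) (repV H) (bmulE (repV F) (repV G) (repE F) (repE G)) (repE H)).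
by rewrite lmulA_Phi.
Qed.

Lemma bmulDl : forall x y z : B, bmul (x + y) z = bmul x z + bmul y z.
Proof.
move=> F G H; apply: sval_inj.
have E : sval' (F + G) = Phi (rep F ++ rep G) by rewrite Phi_cat -!repE.
rewrite (bmulE (proj2 (validL_cat _ _ _ _) (conj (repV F) (repV G))) (repV H) E (repE H)).
rewrite lmul_cat Phi_cat sval_add.
by rewrite (bmulE (repV F) (repV H) (repE F) (repE H)) (bmulE (repV G) (repV H) (repE G) (repE H)).
Qed.

Lemma bmulDr : forall x y z : B, bmul x (y + z) = bmul x y + bmul x z.
Proof.
move=> F G H; apply: sval_inj.
have E : sval' (G + H) = Phi (rep G ++ rep H) by rewrite Phi_cat -!repE.
rewrite (bmulE (repV F) (proj2 (validL_cat _ _ _ _) (conj (repV G) (repV H))) (repE F) E).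
rewrite lmulDr_Phi sval_add.
by rewrite (bmulE (repV F) (repV G) (repE F) (repE G)) (bmulE (repV F) (repV H) (repE F) (repE H)).
Qed.

Lemma bmulZl : forall (a : K) (x y : B), bmul (a *: x) y = a *: bmul x y.
Proof.
move=> a F G; apply: sval_inj.
have E : sval' (a *: F) = Phi (lscale a (rep F)) by rewrite Phi_scale -repE.
rewrite (bmulE (validL_map _ (repV F)) (repV G) E (repE G)) lmulZl_Phi sval_scale.
by rewrite (bmulE (repV F) (repV G) (repE F) (repE G)).
Qed.

Lemma bmulZr : forall (a : K) (x y : B), bmul x (a *: y) = a *: bmul x y.
Proof.
move=> a F G; apply: sval_inj.
have E : sval' (a *: G) = Phi (lscale a (rep G)) by rewrite Phi_scale -repE.
rewrite (bmulE (repV F) (validL_map _ (repV G)) (repE F) E) lmulZr_Phi sval_scale.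
by rewrite (bmulE (repV F) (repV G) (repE F) (repE G)).
Qed.

Definition Balg : nualg K := NUAlg bmulA bmulDl bmulDr bmulZl bmulZr.

End ModelAlg.

Section Comp.
Variables (V Ed : Type).
Lemma mulM_c1 (u : V) (a : seq Ed) w b d w' b' :
  mulM ((u, a), (w, b)) ((w, b ++ d), (w', b')) = Some ((u, a ++ d), (w', b')).
Proof.
case: mulMP => /= [d' _ /catL_inj -> //|d' _|[]].
- by rewrite -catA => /cat_self_nil /nil2 [_ ->].
- by split => //; left; exists d.
Qed.

Lemma mulM_c2 (u : V) (a : seq Ed) w a' d w' b' :
  mulM ((u, a), (w, a' ++ d)) ((w, a'), (w', b')) = Some ((u, a), (w', b' ++ d)).
Proof.
case: mulMP => /= [d' _|d' _ /catL_inj -> //|[]].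
- rewrite -catA => /cat_self_nil /nil2 [-> ->]; by rewrite !cats0.
- by split => //; right; exists d.
Qed.

Lemma mulM_c3 (x y : M V Ed) : ~ (x.2.1 = y.1.1 /\ ((exists d, y.1.2 = x.2.2 ++ d) \/
                               (exists d, x.2.2 = y.1.2 ++ d))) -> mulM x y = None.
Proof. by case: mulMP => // d h1 h2; [case; split => //; left; exists d|move=> _ N; case: N; split => //; right; exists d]. Qed.
End Comp.

Section LPB.
Variables (V Ed : Type) (s r : Ed -> V) (K : fieldType) (R : lmodType K) (delta : V -> R).
Notation M := (M V Ed).
Notation tau := (tauO r delta).
Notation validO := (validO s r).
Notation Phi := (@Phi V Ed s r K R delta).
Notation Balg := (@Balg V Ed s r K R delta).

Definition vm (v : V) : M := ((v, [::]), (v, [::])).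
Definition em (e : Ed) : M := ((s e, [:: e]), (r e, [::])).
Definition esm (e : Ed) : M := ((r e, [::]), (s e, [:: e])).
Lemma valid_vm v : valid s r (vm v). Proof. by []. Qed.
Lemma valid_em e : valid s r (em e). Proof. by []. Qed.
Lemma valid_esm e : valid s r (esm e). Proof. by []. Qed.

Definition gen (x : M) (vx : valid s r x) : Balg :=
  @mk V Ed s r K R delta [:: (1, Some x)] (conj vx I).

Definition P' v := gen (valid_vm v).
Definition S' e := gen (valid_em e).
Definition Ss' e := gen (valid_esm e).

Lemma gen_mulE x y vx vy : sval' (nua_mul Balg (@gen x vx) (@gen y vy)) = Phi [:: (1, mulM x y)].
Proof.
change (sval' (@bmul V Ed s r K R delta (gen vx) (gen vy)) = Phi [:: (1, mulM x y)]).
rewrite (@bmulE V Ed s r K R delta _ _ [:: (1, Some x)] [:: (1, Some y)]) //.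
by rewrite /= mulr1.
Qed.

Lemma Phi_None : Phi [:: (1, None)] = 0.
Proof.
apply: funext => m; rewrite fct_zeroE; case: (pselect (validO m)) => h; last exact: Phi_inv.
rewrite PhiE // /SL big_cons big_nil addr0; case: m h => [z|] h /=; by rewrite scaler0.
Qed.

Lemma gen_mul_Some x y z vx vy vz : mulM x y = Some z ->
  nua_mul Balg (@gen x vx) (@gen y vy) = @gen z vz.
Proof. by move=> E; apply: sval_inj; rewrite gen_mulE E. Qed.

Lemma gen_mul_None x y vx vy : mulM x y = None ->
  nua_mul Balg (@gen x vx) (@gen y vy) = 0.
Proof. by move=> E; apply: sval_inj; rewrite gen_mulE E Phi_None. Qed.

Lemma Phi1 o m : validO m -> Phi [:: (1, o)] m = tau (app o m).
Proof. by move=> vm; rewrite PhiE // /SL big_cons big_nil addr0 scale1r. Qed.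

End LPB.

Lemma cat1_nil (T : Type) (b : seq T) e : b ++ [:: e] = [:: e] -> b = [::].
Proof. case: b => // x [|y b] //= [_]; by case: b. Qed.

Lemma sum_zero_In (T : Type) (R : nmodType) (l : seq T) (F : T -> R) :
  (forall e, List.In e l -> F e = 0) -> \sum_(e <- l) F e = 0.
Proof.
elim: l => [|x l IH] H; first by rewrite big_nil.
by rewrite big_cons H /= ?IH ?addr0 //; [move=> e he; apply: H; right | left].
Qed.

Lemma sum_single (T : Type) (R : nmodType) (l : seq T) (F : T -> R) e0 :
  List.NoDup l -> List.In e0 l -> (forall e, List.In e l -> e <> e0 -> F e = 0) ->
  \sum_(e <- l) F e = F e0.
Proof.
elim: l => [|x l IH] //= nd hin H; move: nd => /List.NoDup_cons_iff [nx nd].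
rewrite big_cons; case: hin => [E|h].
- subst x; have -> : \sum_(j <- l) F j = 0.
    apply: sum_zero_In => e he; apply: H; first by right.
    by move=> E; subst.
  by rewrite addr0.
- rewrite (H x); [|by left|by move=> E; subst].
  rewrite add0r IH // => e he; apply: H; by right.
Qed.

Lemma eq_sum_In (T : Type) (R : nmodType) (l : seq T) (F G : T -> R) :
  (forall e, List.In e l -> F e = G e) -> \sum_(e <- l) F e = \sum_(e <- l) G e.
Proof.
elim: l => [|x l IH] H; first by rewrite !big_nil.
rewrite !big_cons H ?IH //; [move=> e he; apply: H; right | left] => //.
Qed.

Section LPB2.
Variables (V Ed : Type) (s r : Ed -> V) (K : fieldType) (R : lmodType K) (delta : V -> R).
Notation M := (M V Ed).
Notation tau := (tauO r delta).
Notation validO := (validO s r).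
Notation Phi := (@Phi V Ed s r K R delta).
Notation Balg := (@Balg V Ed s r K R delta).
Notation gen := (@gen V Ed s r K R delta).
Notation P' := (@P' V Ed s r K R delta).
Notation S' := (@S' V Ed s r K R delta).
Notation Ss' := (@Ss' V Ed s r K R delta).
Notation vm := (@vm V Ed).

Definition eem (e : Ed) : M := ((s e, [:: e]), (s e, [:: e])).
Lemma valid_eem e : valid s r (eem e). Proof. by []. Qed.

Lemma tau_diag x : x.1 = x.2 -> tau (Some x) = delta (path_r r x.1).
Proof. by move=> h; rewrite /tauO; case: pselect. Qed.
Lemma tau_off x : x.1 <> x.2 -> tau (Some x) = 0.
Proof. by move=> h; rewrite /tauO; case: pselect. Qed.

Lemma sval_sum (I : Type) (l : seq I) (F : I -> Balg) :
  sval' (\sum_(i <- l) F i) = \sum_(i <- l) sval' (F i).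
Proof. elim: l => [|i l IH]; by rewrite ?big_nil ?big_cons // sval_add IH. Qed.

Lemma app_SS (x z : M) : app (Some x) (Some z) = mulM x z. Proof. by []. Qed.
Lemma app_SN (o : option M) : app o None = o. Proof. by []. Qed.

Lemma ck2_point v l m : graph_trace s r delta -> enumerates s v l -> l <> [::] -> validO m ->
  tau (app (Some (vm v)) m) = \sum_(e <- l) tau (app (Some (eem e)) m).
Proof.
move=> gt [nd en] ln; case: m => [[[u a] [w b]]|] vm; last first.
  rewrite app_SN tau_diag // (gt v l) //; apply: eq_bigr => e _; by rewrite app_SN tau_diag.
rewrite app_SS; under eq_bigr do rewrite app_SS.
case: (pselect (u = v)) => [uv|uv]; last first.
  rewrite mulM_c3; last by case=> /= E _; apply: uv.
  apply: esym; apply: sum_zero_In => e /en se.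
  rewrite mulM_c3 //= => -[E _]; apply: uv; by rewrite -E.
subst u; move: vm; rewrite /valid /is_path /path_r /=.
have -> : mulM (vm v) (v, a, (w, b)) = Some ((v, a), (w, b)) by exact: (mulM_c1 v [::] v [::] a w b).
case: a => [|e0 a'].
- move=> [_ [cb eab]].
  case: (pselect ((v, [::]) = (w, b))) => [E|NE].
    rewrite tau_diag // (gt v l) //.
    apply: eq_sum_In => e /en se; case: E => <- <-.
    rewrite /eem se (mulM_c2 v [:: e] v [::] [:: e] v [::]) tau_diag //.
  rewrite tau_off //; apply: esym; apply: sum_zero_In => e /en se.
  rewrite /eem se (mulM_c2 v [:: e] v [::] [:: e] w b) tau_off // => -[E1 E2].
  by apply: NE; rewrite -E1 (cat1_nil (esym E2)).
- move=> [[/= se0 _] _].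
  have h0 : List.In e0 l by apply/en.
  rewrite (sum_single nd h0).
    by rewrite /eem se0 (mulM_c1 v [:: e0] v [:: e0] a' w b).
  move=> e /en se ne; rewrite mulM_c3 //= => -[_ [[d E]|[d E]]]; apply: ne; by case: E.
Qed.

Lemma LPB : graph_trace s r delta -> LP_family s r P' S' Ss'.
Proof.
move=> gt; split.
- split => [v|v w vw].
  + apply: gen_mul_Some; exact: (mulM_c1 v [::] v [::] [::] v [::]).
  + apply: gen_mul_None; apply: mulM_c3 => /= -[E _]; exact: vw E.
- move=> e; split; apply: gen_mul_Some.
  + exact: (mulM_c1 (s e) [::] (s e) [::] [:: e] (r e) [::]).
  + exact: (mulM_c1 (s e) [:: e] (r e) [::] [::] (r e) [::]).
- move=> e; split; apply: gen_mul_Some.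
  + exact: (mulM_c1 (r e) [::] (r e) [::] [::] (s e) [:: e]).
  + exact: (mulM_c2 (r e) [::] (s e) [::] [:: e] (s e) [::]).
- split => [e|e f ef].
  + apply: gen_mul_Some; exact: (mulM_c1 (r e) [::] (s e) [:: e] [::] (r e) [::]).
  + apply: gen_mul_None; apply: mulM_c3 => /= -[_ [[d E]|[d E]]]; apply: ef; by case: E.
- move=> v l en ln.
  have E : forall e, nua_mul Balg (S' e) (Ss' e) = gen (valid_eem e).
    move=> e; apply: gen_mul_Some; exact: (mulM_c1 (s e) [:: e] (r e) [::] [::] (s e) [:: e]).
  under eq_bigr do rewrite E.
  apply: sval_inj; rewrite sval_sum fct_sumE; apply: funext => m /=.
  case: (pselect (validO m)) => vm.
    rewrite Phi1 // (ck2_point gt en ln vm); apply: eq_bigr => e _; by rewrite Phi1.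
  rewrite Phi_inv // big1 // => e _; exact: Phi_inv.
Qed.

End LPB2.

Section HomFold.
Variables (K : fieldType) (A B : nualg K) (f : A -> B) (Ed : Type).
Lemma hom_foldl_r (S : Ed -> A) (S' : Ed -> B) l a : nua_hom f -> (forall e, f (S e) = S' e) ->
  f (foldl (fun x e => nua_mul A x (S e)) a l) = foldl (fun x e => nua_mul B x (S' e)) (f a) l.
Proof. move=> [_ _ hm] hS; elim: l a => //= e l IH a; by rewrite IH hm hS. Qed.
Lemma hom_foldl_l (S : Ed -> A) (S' : Ed -> B) l a : nua_hom f -> (forall e, f (S e) = S' e) ->
  f (foldl (fun x e => nua_mul A (S e) x) a l) = foldl (fun x e => nua_mul B (S' e) x) (f a) l.
Proof. move=> [_ _ hm] hS; elim: l a => //= e l IH a; by rewrite IH hm hS. Qed.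
End HomFold.

Section PmonB.
Variables (V Ed : Type) (s r : Ed -> V) (K : fieldType) (R : lmodType K) (delta : V -> R).
Notation M := (M V Ed).
Notation tau := (tauO r delta).
Notation validO := (validO s r).
Notation Phi := (@Phi V Ed s r K R delta).
Notation Balg := (@Balg V Ed s r K R delta).
Notation gen := (@gen V Ed s r K R delta).
Notation P' := (@P' V Ed s r K R delta).
Notation S' := (@S' V Ed s r K R delta).
Notation Ss' := (@Ss' V Ed s r K R delta).
Notation lv := (last_vertex r).

Lemma mul_single (G H : Balg) x y : valid s r x -> valid s r y ->
  sval' G = Phi [:: (1, Some x)] -> sval' H = Phi [:: (1, Some y)] ->
  sval' (nua_mul Balg G H) = Phi [:: (1, mulM x y)].
Proof.
move=> vx vy EG EH.
change (sval' (@bmul V Ed s r K R delta G H) = Phi [:: (1, mulM x y)]).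
rewrite (@bmulE V Ed s r K R delta _ _ [:: (1, Some x)] [:: (1, Some y)]) //.
by rewrite /= mulr1.
Qed.

Lemma foldS l : forall u a w (G : Balg), valid s r ((u, a), (w, [::])) ->
  sval' G = Phi [:: (1, Some ((u, a), (w, [::])))] -> chain s r w l ->
  sval' (foldl (fun x e => nua_mul Balg x (S' e)) G l) = Phi [:: (1, Some ((u, a ++ l), (lv w l, [::])))].
Proof.
elim: l => [|e l IH] u a w G vx EG /=; first by rewrite cats0.
move=> [se cl].
have vy : valid s r ((u, a ++ [:: e]), (r e, [::])).
  move: vx; rewrite /valid /is_path /path_r /= chain_cat lv_cat => -[ca [_ ea]].
  by rewrite ea /=; do !split.
rewrite (IH u (a ++ [:: e]) (r e)) //; first by rewrite -catA.
rewrite (@mul_single G (S' e) ((u, a), (w, [::])) (em s r e)) //.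
by rewrite -se (mulM_c1 u a (s e) [::] [:: e] (r e) [::]).
Qed.

Lemma foldSs l : forall u b w (G : Balg), valid s r ((w, [::]), (u, b)) ->
  sval' G = Phi [:: (1, Some ((w, [::]), (u, b)))] -> chain s r w l ->
  sval' (foldl (fun x e => nua_mul Balg (Ss' e) x) G l) = Phi [:: (1, Some ((lv w l, [::]), (u, b ++ l)))].
Proof.
elim: l => [|e l IH] u b w G vx EG /=; first by rewrite cats0.
move=> [se cl].
have vy : valid s r ((r e, [::]), (u, b ++ [:: e])).
  move: vx; rewrite /valid /is_path /path_r /= chain_cat lv_cat => -[_ [cb eb]].
  by rewrite -eb /=; do !split.
rewrite (IH u (b ++ [:: e]) (r e)) //; first by rewrite -catA.
rewrite (@mul_single (Ss' e) G (esm s r e) ((w, [::]), (u, b))) //.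
by rewrite -se (mulM_c2 (r e) [::] (s e) [::] [:: e] u b).
Qed.

Lemma pmonB p : is_path s r p ->
  sval' (pmon P' S' p) = Phi [:: (1, Some ((p.1, p.2), (path_r r p, [::])))].
Proof.
case: p => u l /= cl; rewrite /pmon /=.
by rewrite (@foldS l u [::] u) //.
Qed.

Lemma pmon_starB q : is_path s r q ->
  sval' (pmon_star P' Ss' q) = Phi [:: (1, Some ((path_r r q, [::]), (q.1, q.2)))].
Proof.
case: q => u l /= cl; rewrite /pmon_star /=.
by rewrite (@foldSs l u [::] u) //.
Qed.

End PmonB.

Section SpanA.
Variables (V Ed : Type) (s r : Ed -> V) (K : fieldType) (A : nualg K)
  (P : V -> A) (S Ss : Ed -> A).
Hypothesis LPA : LP_family s r P S Ss.
Local Notation "x ** y" := (nua_mul A x y) (at level 40, left associativity).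
Notation lv := (last_vertex r).
Notation M := (M V Ed).

Lemma mul0l x : 0 ** x = 0.
Proof. apply: (@addrI _ (0 ** x)); by rewrite -nua_mulDl !addr0. Qed.
Lemma mul0r x : x ** 0 = 0.
Proof. apply: (@addrI _ (x ** 0)); by rewrite -nua_mulDr !addr0. Qed.

Definition fR l a := foldl (fun x e => x ** S e) a l.
Definition fL l a := foldl (fun x e => Ss e ** x) a l.

Lemma fR_assoc l a b : fR l (a ** b) = a ** fR l b.
Proof. elim: l a b => //= e l IH a b; by rewrite -nua_mulA IH. Qed.
Lemma fL_assoc l a b : fL l (a ** b) = fL l a ** b.
Proof. elim: l a b => //= e l IH a b; by rewrite nua_mulA IH. Qed.
Lemma fL0 l : fL l 0 = 0.
Proof. by elim: l => //= e l IH; rewrite mul0r. Qed.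

Definition pm (p : path V Ed) := fR p.2 (P p.1).
Definition ps (q : path V Ed) := fL q.2 (P q.1).
Lemma pmE p : pmon P S p = pm p. Proof. by []. Qed.
Lemma psE q : pmon_star P Ss q = ps q. Proof. by []. Qed.

Definition mon (x : M) := pm x.1 ** ps x.2.
Definition monO (o : option M) := if o is Some x then mon x else 0.

Lemma PP v : P v ** P v = P v. Proof. by have [[h _] _ _ _ _] := LPA. Qed.
Lemma PPn v w : v <> w -> P v ** P w = 0. Proof. have [[_ h] _ _ _ _] := LPA; exact: h. Qed.
Lemma PS e : P (s e) ** S e = S e. Proof. by have [_ h _ _ _] := LPA; case: (h e). Qed.
Lemma SP e : S e ** P (r e) = S e. Proof. by have [_ h _ _ _] := LPA; case: (h e). Qed.
Lemma PSs e : P (r e) ** Ss e = Ss e. Proof. by have [_ _ h _ _] := LPA; case: (h e). Qed.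
Lemma SsP e : Ss e ** P (s e) = Ss e. Proof. by have [_ _ h _ _] := LPA; case: (h e). Qed.
Lemma SsS e : Ss e ** S e = P (r e). Proof. by have [_ _ _ [h _] _] := LPA. Qed.
Lemma SsSn e f : e <> f -> Ss e ** S f = 0. Proof. have [_ _ _ [_ h] _] := LPA; exact: h. Qed.

Lemma PSn v e : v <> s e -> P v ** S e = 0.
Proof. by move=> h; rewrite -PS nua_mulA PPn // mul0l. Qed.
Lemma PSsn v e : v <> r e -> P v ** Ss e = 0.
Proof. by move=> h; rewrite -PSs nua_mulA PPn // mul0l. Qed.

Lemma pm_cons u e l : pm (u, e :: l) = (P u ** S e) ** pm (r e, l).
Proof. by rewrite /pm /= -fR_assoc -nua_mulA SP. Qed.
Lemma ps_cons u e l : ps (u, e :: l) = ps (r e, l) ** (Ss e ** P u).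
Proof. by rewrite /ps /= -fL_assoc nua_mulA PSs. Qed.

Lemma pm_P u l : pm (u, l) ** P (lv u l) = pm (u, l).
Proof.
elim: l u => [|e l IH] u; first exact: PP.
by rewrite pm_cons -nua_mulA IH.
Qed.

Lemma ps_P w z b : ps (w, b) ** P z = if pselect (w = z) then ps (w, b) else 0.
Proof.
rewrite /ps /= -fL_assoc; case: pselect => /= [e|n]; first by rewrite -e PP.
by rewrite PPn // fL0.
Qed.

Lemma pm_rcons u a e : pm (u, a ++ [:: e]) = pm (u, a) ** S e.
Proof. by rewrite /pm /fR /= foldl_cat. Qed.

Notation validA := (valid s r).
Notation validOA := (validO s r).

Lemma RM_P x z : validA x -> exists o, validOA o /\ mon x ** P z = monO o.
Proof.
case: x => p [w b] vx; rewrite /mon /= -nua_mulA ps_P; case: pselect => h.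
  by exists (Some (p, (w, b))).
by exists None; rewrite mul0r.
Qed.

Lemma RM_S x e : validA x -> exists o, validOA o /\ mon x ** S e = monO o.
Proof.
case: x => [[u a] [w b]]; rewrite /valid /is_path /path_r /= => -[ca [cb eab]].
rewrite /mon /= -nua_mulA /ps /= -fL_assoc.
case: (pselect (w = s e)) => [we|wn]; last first.
  by exists None; rewrite PSn // fL0 mul0r.
rewrite we PS; case: b cb eab => [|e1 b'] /=.
  move=> _ eab; exists (Some ((u, a ++ [:: e]), (r e, [::]))); split.
    rewrite /validO /valid /is_path /path_r /= chain_cat lv_cat eab we /=; by do !split.
  rewrite -pm_rcons; change (pm (u, a ++ [:: e]) = pm (u, a ++ [:: e]) ** P (r e)).
  have -> : r e = lv u (a ++ [:: e]) by rewrite lv_cat.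
  by rewrite pm_P.
move=> [se1 cb'] eab.
case: (pselect (e1 = e)) => [E|NE]; last first.
  by exists None; rewrite SsSn // fL0 mul0r.
subst e1; rewrite SsS; exists (Some ((u, a), (r e, b'))); split => //.
Qed.

Lemma RM_Ss x e : validA x -> exists o, validOA o /\ mon x ** Ss e = monO o.
Proof.
case: x => [[u a] [w b]]; rewrite /valid /is_path /path_r /= => -[ca [cb eab]].
rewrite /mon /= -nua_mulA /ps /= -fL_assoc.
case: (pselect (w = r e)) => [we|wn]; last first.
  by exists None; rewrite PSsn // fL0 mul0r.
rewrite we PSs -SsP; exists (Some ((u, a), (s e, e :: b))); split => //.
try by rewrite /validO /valid /is_path /path_r /= -we eab.
Qed.

End SpanA.

Lemma sval_sumT (K : fieldType) (U : lmodType K) (SS : subspec U) (I : Type) (l : seq I) (F : I -> subT SS) :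
  sval' (\sum_(i <- l) F i) = \sum_(i <- l) sval' (F i).
Proof. elim: l => [|i l IH]; by rewrite ?big_nil ?big_cons // sval_add IH. Qed.

Section SpanC.
Variables (V Ed : Type) (s r : Ed -> V) (K : fieldType) (A : nualg K)
  (P : V -> A) (S Ss : Ed -> A).
Hypothesis LPA : LP_family s r P S Ss.
Local Notation "x ** y" := (nua_mul A x y) (at level 40, left associativity).
Notation M := (M V Ed).
Notation monO := (monO P S Ss).
Notation mon := (mon P S Ss).
Notation validOA := (validO s r).

Definition QA (a : A) := exists l : seq (K * option M),
  (forall km, List.In km l -> validOA km.2) /\ a = \sum_(km <- l) km.1 *: monO km.2.

Lemma QA0 : QA 0. Proof. by exists [::]; rewrite big_nil. Qed.
Lemma QAD a b : QA a -> QA b -> QA (a + b).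
Proof.
move=> [l1 [v1 ->]] [l2 [v2 ->]]; exists (l1 ++ l2); rewrite big_cat; split => //.
move=> km h; case: (List.in_app_or _ _ _ h) => h'; [exact: v1|exact: v2].
Qed.
Lemma QAN a : QA a -> QA (- a).
Proof.
move=> [l [vl ->]]; exists [seq (- km.1, km.2) | km <- l]; split.
  move=> km h; have [km' [<- h']] := proj1 (List.in_map_iff _ _ _) h; exact: (vl _ h').
by rewrite big_map -sumrN; apply: eq_bigr => km _; rewrite scaleNr.
Qed.
Lemma QAZ (c : K) a : QA a -> QA (c *: a).
Proof.
move=> [l [vl ->]]; exists [seq (c * km.1, km.2) | km <- l]; split.
  move=> km h; have [km' [<- h']] := proj1 (List.in_map_iff _ _ _) h; exact: (vl _ h').
by rewrite big_map scaler_sumr; apply: eq_bigr => km _; rewrite scalerA.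
Qed.
Lemma QAmon o : validOA o -> QA (monO o).
Proof. move=> vo; exists [:: (1, o)]; split; last by rewrite big_cons big_nil addr0 scale1r.
by move=> km [<-|]. Qed.

Lemma QA_sum (l : seq (K * option M)) : (forall km, List.In km l -> QA (km.1 *: monO km.2)) ->
  QA (\sum_(km <- l) km.1 *: monO km.2).
Proof.
elim: l => [|km l IH] H; first by rewrite big_nil; exact: QA0.
rewrite big_cons; apply: QAD; first by apply: H; left.
by apply: IH => k h; apply: H; right.
Qed.

Lemma QA_rg g : (forall x, valid s r x -> exists o, validOA o /\ mon x ** g = monO o) ->
  forall a, QA a -> QA (a ** g).
Proof.
move=> RM a [l [vl ->]].
have -> : (\sum_(km <- l) km.1 *: monO km.2) ** g = \sum_(km <- l) (km.1 *: (monO km.2 ** g)).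
  elim: l {vl} => [|km l IH]; first by rewrite !big_nil mul0l.
  by rewrite !big_cons nua_mulDl nua_mulZl IH.
elim: l vl => [|km l IH] vl; first by rewrite big_nil; exact: QA0.
rewrite big_cons; apply: QAD; last by apply: IH => k h; apply: vl; right.
apply: QAZ; case: km vl => k [x|] vl /=; last by rewrite mul0l; exact: QA0.
have [o [vo ->]] := RM x (vl (k, Some x) (or_introl erefl)); exact: QAmon.
Qed.

Lemma QA_P a v : QA a -> QA (a ** P v). Proof. apply: QA_rg => x vx; exact: RM_P. Qed.
Lemma QA_S a e : QA a -> QA (a ** S e). Proof. apply: QA_rg => x vx; exact: RM_S. Qed.
Lemma QA_Ss a e : QA a -> QA (a ** Ss e). Proof. apply: QA_rg => x vx; exact: RM_Ss. Qed.

Lemma QA_fR l b : QA b -> QA (fR S l b).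
Proof. elim: l b => //= e l IH b h; apply: IH; exact: QA_S. Qed.

Lemma QA_fL l c : (forall z, QA z -> QA (z ** c)) -> forall a, QA a -> QA (a ** fL Ss l c).
Proof.
elim: l c => //= e l IH c Hc; apply: IH => z hz.
by rewrite nua_mulA; apply: Hc; exact: QA_Ss.
Qed.

Lemma QA_mon a x : QA a -> QA (a ** mon x).
Proof.
move=> h; rewrite /mon /pm /ps nua_mulA.
have Hc : forall z, QA z -> QA (z ** P x.2.1) by move=> z hz; exact: QA_P.
apply: (QA_fL x.2.2 Hc).
by rewrite -fR_assoc; apply: QA_fR; exact: QA_P.
Qed.

Lemma QA_mul a b : QA a -> QA b -> QA (a ** b).
Proof.
move=> ha [l [vl ->]].
have -> : a ** (\sum_(km <- l) km.1 *: monO km.2) = \sum_(km <- l) (km.1 *: (a ** monO km.2)).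
  elim: l {vl} => [|km l IH]; first by rewrite !big_nil mul0r.
  by rewrite !big_cons nua_mulDr nua_mulZr IH.
elim: l vl => [|km l IH] vl; first by rewrite big_nil; exact: QA0.
rewrite big_cons; apply: QAD; last by apply: IH => k h; apply: vl; right.
apply: QAZ; case: km vl => k [x|] vl /=; last by rewrite mul0r; exact: QA0.
exact: QA_mon.
Qed.

Definition CS : subspec A := SubSpec QA0 QAD QAN QAZ.
Definition Ct := subT CS.
Definition cmul (x y : Ct) : Ct := exist _ (sval' x ** sval' y) (QA_mul (proj2_sig x) (proj2_sig y)).

Lemma cmulA : forall x y z : Ct, cmul x (cmul y z) = cmul (cmul x y) z.
Proof. by move=> x y z; apply: sval_inj; rewrite /= nua_mulA. Qed.
Lemma cmulDl : forall x y z : Ct, cmul (x + y) z = cmul x z + cmul y z.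
Proof. by move=> x y z; apply: sval_inj; rewrite /= nua_mulDl. Qed.
Lemma cmulDr : forall x y z : Ct, cmul x (y + z) = cmul x y + cmul x z.
Proof. by move=> x y z; apply: sval_inj; rewrite /= nua_mulDr. Qed.
Lemma cmulZl : forall (a : K) (x y : Ct), cmul (a *: x) y = a *: cmul x y.
Proof. by move=> a x y; apply: sval_inj; rewrite /= nua_mulZl. Qed.
Lemma cmulZr : forall (a : K) (x y : Ct), cmul x (a *: y) = a *: cmul x y.
Proof. by move=> a x y; apply: sval_inj; rewrite /= nua_mulZr. Qed.

Definition Calg : nualg K := NUAlg cmulA cmulDl cmulDr cmulZl cmulZr.

Lemma QA_Pv v : QA (P v).
Proof. rewrite -(PP LPA); exact: (@QAmon (Some (@vm V Ed v)) (valid_vm s r v)). Qed.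
Lemma QA_Se e : QA (S e).
Proof.
have := @QAmon (Some (em s r e)) (valid_em s r e).
by rewrite /= /mon /pm /ps /= (PS LPA) (SP LPA).
Qed.
Lemma QA_Sse e : QA (Ss e).
Proof.
have := @QAmon (Some (esm s r e)) (valid_esm s r e).
by rewrite /= /mon /pm /ps /= (SsP LPA) (PSs LPA).
Qed.

Definition Pc v : Calg := exist _ (P v) (QA_Pv v).
Definition Sc e : Calg := exist _ (S e) (QA_Se e).
Definition Ssc e : Calg := exist _ (Ss e) (QA_Sse e).

Lemma LPC : LP_family s r Pc Sc Ssc.
Proof.
have [[h1 h2] h3 h4 [h5 h6] h7] := LPA.
split.
- split => [v|v w vw]; apply: sval_inj => /=; [exact: h1|exact: h2].
- move=> e; split; apply: sval_inj => /=; by case: (h3 e).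
- move=> e; split; apply: sval_inj => /=; by case: (h4 e).
- split => [e|e f ef]; apply: sval_inj => /=; [exact: h5|exact: h6].
- move=> v l en ln; apply: sval_inj; rewrite sval_sumT /=; exact: h7.
Qed.

End SpanC.

Lemma QA_all (V Ed : Type) (s r : Ed -> V) (K : fieldType) (A : nualg K)
  (P : V -> A) (S Ss : Ed -> A) (H : is_LPA s r P S Ss) (x : A) : QA s r P S Ss x.
Proof.
case: H => LPA univ.
have [fC [[ha hs hm] fCP fCS fCSs _]] := univ _ _ _ _ (LPC LPA).
have [f0 [_ _ _ _ uniq]] := univ _ _ _ _ LPA.
pose g := fun y => sval' (fC y).
have hg : nua_hom g by split => [y z|c y|y z]; rewrite /g ?ha ?hs ?hm.
have gP : forall v, g (P v) = P v by move=> v; rewrite /g fCP.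
have gS : forall e, g (S e) = S e by move=> e; rewrite /g fCS.
have gSs : forall e, g (Ss e) = Ss e by move=> e; rewrite /g fCSs.
have e1 := uniq g hg gP gS gSs.
have hid : nua_hom (fun y : A => y) by [].
have e2 := uniq (fun y => y) hid (fun v => erefl) (fun e => erefl) (fun e => erefl).
have -> : x = g x by rewrite (e1 x); exact: (e2 x).
exact: (proj2_sig (fC x)).
Qed.

Lemma t_zero (K : fieldType) (A : nualg K) (R : zmodType) (t : A -> R) :
  (forall x y, t (x + y) = t x + t y) -> t 0 = 0.
Proof. move=> h; apply: (@addrI _ (t 0)); by rewrite -h !addr0. Qed.

Lemma t_sum (K : fieldType) (A : nualg K) (R : zmodType) (t : A -> R) (I : Type) (l : seq I) F :
  (forall x y, t (x + y) = t x + t y) -> t (\sum_(i <- l) F i) = \sum_(i <- l) t (F i).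
Proof.
move=> h; elim: l => [|i l IH]; first by rewrite !big_nil t_zero.
by rewrite !big_cons h IH.
Qed.

Lemma tauB_comm (V Ed : Type) (s r : Ed -> V) (K : fieldType) (R : lmodType K) (delta : V -> R)
  (F G : Balg s r delta) :
  sval' (bmul F G) None = sval' (bmul G F) None.
Proof.
rewrite (bmulE (repV F) (repV G) (repE F) (repE G)) (bmulE (repV G) (repV F) (repE G) (repE F)).
rewrite (WL delta (repV F) (repV G)) // (WR delta (repV G) (repV F)) //.
Qed.

Unset Implicit Arguments.

Theorem proposition2p7 (K : fieldType) (V Ed : Type) (s r : Ed -> V)
  (R : algType K) (A : nualg K) (P : V -> A) (S Ss : Ed -> A) :
  is_LPA s r P S Ss ->
  let CT (t : A -> R) :=
    [/\ is_trace t, K_linear t & canonical_trace s r P S Ss t] in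
  (* restriction lands in graph traces *)
  (forall t, CT t -> graph_trace s r (fun v => t (P v))) /\
  (* surjective: every graph trace extends *)
  (forall delta : V -> R, graph_trace s r delta ->
     exists t, CT t /\ forall v, t (P v) = delta v) /\
  (* injective *)
  (forall t1 t2, CT t1 -> CT t2 -> (forall v, t1 (P v) = t2 (P v)) ->
     forall x, t1 x = t2 x).
Proof.
move=> [LPA univ] CT; split; [|split].
- move=> t [[tadd tcomm] tlin tcan] v l en ln /=.
  case: LPA => _ _ _ [ck1 _] ck2.
  rewrite (ck2 v l en ln) t_sum //; apply: eq_bigr => e _; by rewrite tcomm ck1.
- move=> delta gt.
  have [f [hf fP fS fSs _]] := univ _ _ _ _ (LPB gt).
  have hf' := hf; case: hf' => fadd fscale fmul.
  have tv : forall v, sval' (f (P v)) None = delta v.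
    move=> v; rewrite fP /= Phi1 //; exact: tau_diag.
  exists (fun x => sval' (f x) None); split => //; split.
  + split => [x y|x y]; first by rewrite fadd.
    by rewrite !fmul; exact: tauB_comm.
  + by move=> a x; rewrite fscale.
  + move=> p q pp pq er.
    rewrite fmul /pmon /pmon_star (hom_foldl_r _ _ hf fS) (hom_foldl_l _ _ hf fSs) !fP.
    have tv' : forall v, sval' (P' s r delta v) None = delta v by move=> v; rewrite -fP.
    rewrite -/(pmon _ _ p) -/(pmon_star _ _ q) tv'.
    rewrite (mul_single _ _ (pmonB delta pp) (pmon_starB delta pq)); try done.
    rewrite er (mulM_c1 p.1 p.2 (path_r r q) [::] [::] q.1 q.2) Phi1 //= cats0.
    split=> [E|NE]; case: pselect => E'.
    * by subst q; case: (p) E'.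
    * by case: E'; rewrite E.
    * by case: NE; move: E'; case: (p) => ? ?; case: (q) => ? ? /= ->.
    * by [].
- move=> t1 t2 [[a1 c1] l1 can1] [[a2 c2] l2 can2] eqv x.
  have [l [vl ->]] := QA_all (conj LPA univ) x.
  rewrite !t_sum //; apply: eq_sum_In => km hkm; rewrite l1 l2; congr (_ *: _).
  case: km hkm => k [[p q]|] hkm /=; last by rewrite !t_zero.
  have [pp [pq er]] := vl _ hkm.
  change (t1 (nua_mul A (pmon P S p) (pmon_star P Ss q)) = t2 (nua_mul A (pmon P S p) (pmon_star P Ss q))).
  case: (pselect (p = q)) => [E|NE].
    by rewrite (proj1 (can1 p q pp pq er) E) (proj1 (can2 p q pp pq er) E) eqv.
  by rewrite (proj2 (can1 p q pp pq er) NE) (proj2 (can2 p q pp pq er) NE).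
Qed.
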